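(* For $m\in\mathbb{N}$ let $A_m,B_m\in\mathbb{R}^{m\times m}$ be given by $(A_m)_{ij}=1$ if $|i-j|=1$ and $0$ otherwise, and $(B_m)_{ij}=1$ if $j=i+1$, $(B_m)_{ij}=-1$ if $j=i-1$, and $0$ otherwise. Let $e_1,e_m$ be the first and last standard basis vectors of $\mathbb{R}^m$ and set \[ \tilde A=A_m+e_1e_1^T-e_me_m^T,\quad \tilde B=B_m+e_1e_1^T+e_me_m^T,\quad \hat A=-A_m+e_1e_1^T-e_me_m^T. \] For real $c\ge 0$ let \[ \tilde H_c(m)=\begin{bmatrix}\tilde A+2cI & \tilde B\\ \tilde B^T & \hat A-2cI\end{bmatrix}\in\mathbb{R}^{2m\times 2m}. \] Then for all $m\in\mathbb{N}$ and $c\ge 0$ the eigenvalues of $\tilde H_c(m)$ come in plus/minus pairs (counting multiplicity), and $(-2|c-1|,2|c-1|)\cap\sigma(\tilde H_c(m))=\emptyset$. Moreover, $(-2|c-1|,2|c-1|)$ is the largest interval with this property: for every $\epsilon>0$ there is $m$ such that $(-2|c-1|-\epsilon,2|c-1|+\epsilon)\cap\sigma(\tilde H_c(m))\neq\emptyset$.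
   Context: $\sigma$ denotes the spectrum. *)

(* Defs.v *)
From HB Require Import structures.
From mathcomp Require Import all_boot all_order all_algebra.
From mathcomp Require Import reals.
Set Implicit Arguments. Unset Strict Implicit. Unset Printing Implicit Defensive.
Import Order.TTheory GRing.Theory Num.Theory.
Local Open Scope ring_scope.

(* Indices i : 'I_m correspond to the paper's 1..m via i+1.
   e_1 <-> index 0, e_m <-> index m-1. *)
Section Mats.
Variable R : realType.
Variable m : nat.

Definition ind (b : bool) : R := if b then 1 else 0.

Definition A_m : 'M[R]_m :=
  \matrix_(i, j) ind ((i.+1 == j :> nat) || (j.+1 == i :> nat)).
Definition B_m : 'M[R]_m :=
  \matrix_(i, j) (ind (i.+1 == j :> nat) - ind (j.+1 == i :> nat)).

Definition E11 : 'M[R]_m := \matrix_(i, j) ind ((i == 0%N :> nat) && (j == 0%N :> nat)).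
Definition Emm : 'M[R]_m := \matrix_(i, j) ind ((i == m.-1 :> nat) && (j == m.-1 :> nat)).

Definition Atil : 'M[R]_m := A_m + E11 - Emm.
Definition Btil : 'M[R]_m := B_m + E11 + Emm.
Definition Ahat : 'M[R]_m := - A_m + E11 - Emm.

Definition Htil (c : R) : 'M[R]_(m + m) :=
  block_mx (Atil + (2 * c)%:M) Btil Btil^T (Ahat - (2 * c)%:M).
End Mats.

(* Main.v *)
Require Import Defs.
From HB Require Import structures.
From mathcomp Require Import all_boot all_order all_algebra.
From mathcomp Require Import reals.
From mathcomp Require Import trigo.
From mathcomp Require Import zify ring lra.
Import Order.TTheory GRing.Theory Num.Theory.
Local Open Scope ring_scope.
Set Implicit Arguments. Unset Strict Implicit. Unset Printing Implicit Defensive.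


Section Basic.
Variable R : realType.
Variable m : nat.

Lemma sum_ind1 (a : nat) (g : nat -> R) :
  \sum_(k < m) ind R ((k : nat) == a) * g k = if (a < m)%N then g a else 0.
Proof.
rewrite -(big_mkord xpredT (fun k => ind R (k == a) * g k)) /=.
elim: m => [|n IH]; first by rewrite big_geq.
rewrite big_nat_recr //= IH /ind.
case: (ltngtP a n) => H; rewrite ?mul0r ?mul1r ?addr0 ?add0r.
- by rewrite ifT //; lia.
- by rewrite ifF //; lia.
- by subst a; rewrite ltnSn.
Qed.

Definition Sh : 'M[R]_m := \matrix_(i, j) ind R (i.+1 == j :> nat).
Notation E := (E11 R m).
Notation F := (Emm R m).

Lemma A_mE : A_m R m = Sh + Sh^T.
Proof.
apply/matrixP => i j; rewrite !mxE /ind.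
case: eqP; case: eqP => //= *; try lia; rewrite ?addr0 ?add0r //.
Qed.

Lemma B_mE : B_m R m = Sh - Sh^T.
Proof. by apply/matrixP => i j; rewrite !mxE. Qed.


Lemma sum_ind_gen (P : 'I_m -> bool) (a : nat) (Q : bool) :
  (forall k : 'I_m, P k = ((k : nat) == a) && Q) ->
  \sum_(k < m) ind R (P k) = if (a < m)%N then ind R Q else 0.
Proof.
move=> HP; rewrite -(sum_ind1 a (fun _ => ind R Q)).
apply: eq_bigr => k _; rewrite HP // /ind; by case: (k == a :> nat); case: (Q);
  rewrite ?mulr1 ?mulr0 ?mul0r.
Qed.

Lemma ind_mul a b : ind R a * ind R b = ind R (a && b).
Proof. by rewrite /ind; case: a; case: b; rewrite ?mulr1 ?mulr0. Qed.

Lemma scal_entry (i j : 'I_m) (a : R) : (a%:M : 'M[R]_m) i j = a * ind R ((i : nat) == j).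
Proof.
rewrite !mxE /ind; case: (i =P j) => [->|H]; first by rewrite eqxx mulr1.
have /negbTE -> : (i : nat) != j by apply/eqP => /val_inj.
by rewrite mulr0.
Qed.

Lemma eqR_ind (i j : 'I_m) : (i == j)%:R = ind R ((i : nat) == j).
Proof. by rewrite /ind -val_eqE /=; case: (_ == _). Qed.

Lemma eqR_ind2 (i j : 'I_m) (a : R) : a *+ (i == j) = a * ind R ((i : nat) == j).
Proof. by rewrite /ind -val_eqE /=; case: (_ == _); rewrite ?mulr1 ?mulr0. Qed.

Ltac fin := rewrite /ind; repeat (case: ifP => ?); rewrite ?mulr1 ?mulr0 ?subr0 ?sub0r ?subrr; try lra; try lia.

Definition Jf : 'M[R]_m := \matrix_(i, j) ind R (i + j == m.-1 :> nat)%N.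

Ltac pre := apply/matrixP => i j; rewrite !mxE;
  (under eq_bigr => k _ do rewrite !mxE ind_mul).
Ltac sm a Q := rewrite (@sum_ind_gen _ a Q); [| move=> k; have := ltn_ord k; have := ltn_ord i; have := ltn_ord j; lia].
Ltac post := rewrite ?scal_entry ?mxE ?eqR_ind; have := ltn_ord i; have := ltn_ord j; move=> ? ?; fin.

Lemma F1 : Sh *m Sh^T = 1%:M - F.
Proof. pre; sm (i.+1) (j.+1 == i.+1); post. Qed.
Lemma F2 : Sh^T *m Sh = 1%:M - E.
Proof. pre; sm (i.-1) ((0 < i)%N && (i.-1.+1 == j)); post. Qed.
Lemma F3 : Sh *m E = 0.
Proof. pre; sm (i.+1) false; post. Qed.
Lemma F4 : Sh^T *m F = 0.
Proof. pre; sm (m.-1) false; post. Qed.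
Lemma F5 : E *m Sh^T = 0.
Proof. pre; sm 0%N false; post. Qed.
Lemma F6 : F *m Sh = 0.
Proof. pre; sm (m.-1) false; post. Qed.
Lemma F7 : E *m E = E.
Proof. pre; sm 0%N ((i == 0%N :> nat) && (j == 0%N :> nat)); post. Qed.
Lemma F8 : F *m F = F.
Proof. pre; sm (m.-1) ((i == m.-1 :> nat) && (j == m.-1 :> nat)); post. Qed.
Ltac und := under eq_bigr => k _ do rewrite !mxE ind_mul.
Lemma J1 : Jf *m Jf = 1%:M.
Proof. pre; sm (m.-1 - i)%N (m.-1 - i + j == m.-1)%N; post. Qed.
Lemma J2 : Jf *m Sh = Sh^T *m Jf.
Proof. pre; sm (m.-1 - i)%N ((m.-1 - i).+1 == j)%N; und; sm (m.-1 - j)%N ((m.-1 - j).+1 == i)%N; post. Qed.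
Lemma J3 : Jf *m Sh^T = Sh *m Jf.
Proof. pre; sm (m.-1 - i)%N (j.+1 == m.-1 - i)%N; und; sm (i.+1) (i.+1 + j == m.-1)%N; post. Qed.
Lemma J4 : Jf *m E = F *m Jf.
Proof. pre; sm 0%N ((i == m.-1 :> nat) && (j == 0%N :> nat)); und; sm (m.-1) ((i == m.-1 :> nat) && (j == 0%N :> nat)); post. Qed.
Lemma J5 : Jf *m F = E *m Jf.
Proof. pre; sm (m.-1) ((i == 0%N :> nat) && (j == m.-1 :> nat)); und; sm 0%N ((i == 0%N :> nat) && (j == m.-1 :> nat)); post. Qed.
Lemma JT : Jf^T = Jf.
Proof. by apply/matrixP => i j; rewrite !mxE addnC. Qed.
Lemma ET : E^T = E.
Proof. by apply/matrixP => i j; rewrite !mxE andbC. Qed.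
Lemma FT : F^T = F.
Proof. by apply/matrixP => i j; rewrite !mxE andbC. Qed.


Lemma AtilE : Atil R m = Sh + Sh^T + E - F.
Proof. by rewrite /Atil A_mE. Qed.
Lemma AhatE : Ahat R m = - (Sh + Sh^T) + E - F.
Proof. by rewrite /Ahat A_mE. Qed.
Lemma BtilE : Btil R m = Sh - Sh^T + E + F.
Proof. by rewrite /Btil B_mE. Qed.
Lemma BtilTE : (Btil R m)^T = Sh^T - Sh + E + F.
Proof. by rewrite BtilE !raddfD /= raddfN /= trmxK ET FT. Qed.

Ltac expand := rewrite ?(mulmxDl, mulmxDr, mulmxBl, mulmxBr, mulNmx, mulmxN, opprK).
Ltac facts := rewrite ?(F1, F2, F3, F4, F5, F6, F7, F8).
Ltac entries := apply/matrixP => i j; rewrite ?scal_entry !mxE ?eqR_ind ?eqR_ind2.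

Lemma G1 : Atil R m *m Atil R m + Btil R m *m (Btil R m)^T = 4%:M.
Proof.
rewrite BtilTE AtilE BtilE; expand; facts.
entries; lra.
Qed.

Lemma G2 : Atil R m *m Btil R m + Btil R m *m Ahat R m = 0.
Proof. rewrite AtilE BtilE AhatE; expand; facts; entries; lra. Qed.
Lemma G3 : (Btil R m)^T *m Atil R m + Ahat R m *m (Btil R m)^T = 0.
Proof. rewrite BtilTE AtilE AhatE; expand; facts; entries; lra. Qed.
Lemma G4 : (Btil R m)^T *m Btil R m + Ahat R m *m Ahat R m = 4%:M.
Proof. rewrite BtilTE BtilE AhatE; expand; facts; entries; lra. Qed.

Ltac jfacts := rewrite ?(J2, J3, J4, J5).
Lemma P1 : Jf *m (Btil R m)^T = Btil R m *m Jf.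
Proof. rewrite BtilTE BtilE; expand; jfacts; entries; lra. Qed.
Lemma P2 : Jf *m Ahat R m = - (Atil R m *m Jf).
Proof. rewrite AtilE AhatE; expand; jfacts; entries; lra. Qed.
Lemma P3 : Jf *m Atil R m = - (Ahat R m *m Jf).
Proof. rewrite AtilE AhatE; expand; jfacts; entries; lra. Qed.
Lemma P4 : Jf *m Btil R m = (Btil R m)^T *m Jf.
Proof. rewrite BtilTE BtilE; expand; jfacts; entries; lra. Qed.

Lemma Q1 : 2%:M + Atil R m = (1%:M + Sh) *m (1%:M + Sh)^T + E *m E^T.
Proof. rewrite AtilE [(_ + Sh)^T]raddfD /= tr_scalar_mx ET; expand; rewrite ?mul1mx ?mulmx1; facts; entries; lra. Qed.
Lemma Q2 : 2%:M - Ahat R m = (1%:M + Sh^T) *m (1%:M + Sh^T)^T + F *m F^T.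
Proof. rewrite AhatE [(_ + Sh^T)^T]raddfD /= tr_scalar_mx trmxK FT; expand; rewrite ?mul1mx ?mulmx1; facts; entries; lra. Qed.

Variable c : R.
Definition Dm : 'M[R]_(m + m) := block_mx (2%:M + Atil R m) 0 0 (2%:M - Ahat R m).

Lemma HH : Htil m c *m Htil m c = (4 * (c - 1) ^+ 2)%:M + (4 * c) *: Dm.
Proof.
rewrite /Htil /Dm mulmx_block (scalar_mx_block m m) scale_block_mx add_block_mx.
have e1 : Atil R m *m Atil R m = 4%:M - Btil R m *m (Btil R m)^T by rewrite -G1 addrK.
have e2 : Btil R m *m Ahat R m = - (Atil R m *m Btil R m) by apply/eqP; rewrite -subr_eq0 opprK addrC G2.
have e3 : Ahat R m *m (Btil R m)^T = - ((Btil R m)^T *m Atil R m) by apply/eqP; rewrite -subr_eq0 opprK addrC G3.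
have e4 : Ahat R m *m Ahat R m = 4%:M - (Btil R m)^T *m Btil R m by rewrite -G4 addrAC subrr add0r.
move: (Atil R m) (Btil R m) (Ahat R m) e1 e2 e3 e4 => A B Ah e1 e2 e3 e4.
f_equal; expand; rewrite ?(mul_mx_scalar, mul_scalar_mx, e1, e2, e3, e4, mul0mx, mulmx0); entries; lra.
Qed.

Definition Pm : 'M[R]_(m + m) := block_mx 0 Jf (- Jf) 0.

Lemma PH : Pm *m Htil m c = - (Htil m c *m Pm).
Proof.
rewrite /Htil /Pm !mulmx_block opp_block_mx.
move: P1 P2 P3 P4; move: (Atil R m) (Btil R m) (Ahat R m) Jf => A B Ah J e1 e2 e3 e4.
f_equal; expand; rewrite ?(mul_mx_scalar, mul_scalar_mx, mul0mx, mulmx0, e1, e2, e3, e4); entries; lra.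
Qed.

Lemma PP : Pm *m Pm = - 1%:M.
Proof.
rewrite /Pm mulmx_block (scalar_mx_block m m) opp_block_mx.
by rewrite !(mul0mx, mulmx0, mulmxN, mulNmx, J1, add0r, addr0) oppr0.
Qed.

Lemma detPm : \det Pm != 0.
Proof.
apply/eqP => h; have := congr1 determinant PP.
rewrite det_mulmx h mul0r -scaleN1r detZ det1 mulr1 => /esym/eqP.
by rewrite signr_eq0.
Qed.
End Basic.


Section Pair.
Variable R : realType.

Lemma char_poly_comp n (M : 'M[R]_n) :
  char_poly M \Po (- 'X) = (-1) ^+ n * char_poly (- M).
Proof.
rewrite /char_poly /char_poly_mx -det_map_mx.
have -> : map_mx (comp_poly (- 'X)) ('X%:M - map_mx polyC M)
  = - ('X%:M - map_mx polyC (- M)).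
  rewrite map_mxB map_scalar_mx /= comp_polyX.
  apply/matrixP => i j; rewrite !mxE comp_polyC.
  by rewrite polyCN opprK opprD mulNrn.
by rewrite -scaleN1r detZ.
Qed.


Lemma char_poly_sim n (M P : 'M[R]_n) :
  P *m M = - (M *m P) -> \det P != 0 -> char_poly (- M) = char_poly M.
Proof.
move=> PM dP.
have E : map_mx polyC P *m char_poly_mx M = char_poly_mx (- M) *m map_mx polyC P.
  rewrite /char_poly_mx mulmxBr mulmxBl mul_mx_scalar mul_scalar_mx -!map_mxM PM mulNmx.
  by rewrite map_mxN.
have := congr1 determinant E; rewrite !det_mulmx det_map_mx /char_poly => h.
apply/esym; apply: (@mulfI _ (\det P)%:P); first by rewrite polyC_eq0.
by rewrite h mulrC.
Qed.

Lemma neg1P (k : nat) (q : {poly R}) : (-1) ^+ k * q = ((-1) ^+ k) *: q.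
Proof. by rewrite -mul_polyC polyC_exp polyCN polyC1. Qed.

Lemma mup_le (p : {poly R}) (k : nat) : p != 0 -> p \Po (- 'X) = (-1) ^+ k * p ->
  forall l, (mup l p <= mup (- l) p)%N.
Proof.
move=> pnz Hp l.
have dv : ('X - l%:P) ^+ mup l p %| p by rewrite -mup_geq.
have := dvdp_comp_poly (- 'X) dv.
rewrite Hp rmorphXn /= comp_polyB comp_polyX comp_polyC.
have -> : - 'X - l%:P = - ('X - (- l)%:P) by rewrite polyCN opprB addrC.
rewrite [X in X %| _]exprNn !neg1P dvdpZl ?dvdpZr ?signr_eq0 // => h.
by rewrite mup_geq.
Qed.

Lemma mup_sym (p : {poly R}) (k : nat) : p != 0 -> p \Po (- 'X) = (-1) ^+ k * p ->
  forall l, mup l p = mup (- l) p.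
Proof.
move=> pnz Hp l; apply/eqP; rewrite eqn_leq (mup_le pnz Hp).
by have := mup_le pnz Hp (- l); rewrite opprK.
Qed.
End Pair.

Lemma part1a (R : realType) (m : nat) (c l : R) :
  mup l (char_poly (Htil m c)) = mup (- l) (char_poly (Htil m c)).
Proof.
apply: (@mup_sym R _ (m + m)); first by apply: monic_neq0; apply: char_poly_monic.
by rewrite char_poly_comp (char_poly_sim (@PH R m c) (@detPm R m)).
Qed.

Section Gap.
Variable R : realType.

Lemma sq_ge0 n (u : 'rV[R]_n) : 0 <= (u *m u^T) 0 0.
Proof. rewrite !mxE; apply: sumr_ge0 => k _; rewrite !mxE -expr2; exact: sqr_ge0. Qed.

Lemma sq_gt0 n (u : 'rV[R]_n) : u != 0 -> 0 < (u *m u^T) 0 0.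
Proof.
move=> unz; rewrite lt_neqAle sq_ge0 andbT eq_sym; apply: contra unz.
rewrite !mxE psumr_eq0; last by move=> k _; rewrite !mxE -expr2 sqr_ge0.
move/allP => h; apply/eqP/matrixP => i k; rewrite !mxE (ord1 i).
have := h k (mem_index_enum k); rewrite !mxE -expr2 sqrf_eq0 => /eqP ->.
done.
Qed.

Lemma psd_ge0 n (X : 'M[R]_n) (w : 'rV[R]_n) : 0 <= (w *m (X *m X^T) *m w^T) 0 0.
Proof. by rewrite mulmxA -(mulmxA (w *m X)) -trmx_mul sq_ge0. Qed.

Lemma addm_ge0 (A B : 'M[R]_1) : 0 <= A 0 0 -> 0 <= B 0 0 -> 0 <= (A + B) 0 0.
Proof. by rewrite mxE; apply: addr_ge0. Qed.

Lemma Dm_ge0 m (v : 'rV[R]_(m + m)) : 0 <= (v *m Dm R m *m v^T) 0 0.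
Proof.
rewrite -(hsubmxK v) /Dm mul_row_block !mulmx0 addr0 add0r tr_row_mx mul_row_col.
rewrite Q1 Q2; move: (1%:M + Sh R m) (1%:M + (Sh R m)^T) (E11 R m) (Emm R m) => X1 X2 X3 X4.
rewrite !mulmxDr !mulmxDl.
by repeat apply: addm_ge0; apply: psd_ge0.
Qed.

End Gap.

Lemma gap (R : realType) (m : nat) (c l : R) : 0 <= c -> eigenvalue (Htil m c) l ->
  ~ (- (2 * `|c - 1|) < l < 2 * `|c - 1|).
Proof.
move=> c0 /eigenvalueP [v Hv vnz].
have H2 : v *m (Htil m c *m Htil m c) = (l ^+ 2) *: v.
  by rewrite mulmxA Hv -scalemxAl Hv scalerA expr2.
rewrite HH mulmxDr mul_mx_scalar -scalemxAr in H2.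
have := congr1 (fun M => (M *m v^T) 0 0) H2 => /=.
rewrite mulmxDl -!scalemxAl.
have mD (A B : 'M[R]_1) : (A + B) 0 0 = A 0 0 + B 0 0 by rewrite mxE.
have mZ (a : R) (A : 'M[R]_1) : (a *: A) 0 0 = a * A 0 0 by rewrite mxE.
rewrite mD !mZ.
set q := (v *m v^T) 0 0; set d := (v *m Dm R m *m v^T) 0 0.
have q0 : 0 < q by apply: sq_gt0.
have d0 : 0 <= d by apply: Dm_ge0.
move=> E [/andP [h1 h2]].
have a0 := normr_ge0 (c - 1).
have a2 : `|c - 1| ^+ 2 = (c - 1) ^+ 2 by rewrite real_normK // num_real.
have hl : l ^+ 2 < 4 * (c - 1) ^+ 2 by rewrite -a2; nra.
nra.
Qed.


Section Trig.
Variable R : realType.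

Lemma cos_bound (k : nat) : 1 - cos ((pi : R) / 2 / 2 ^+ k) <= 1 / 2 ^+ k.
Proof.
elim: k => [|k IH]; first by rewrite expr0 !divr1 cos_pihalf subr0.
set y := pi / 2 / 2 ^+ k.+1.
have hx : pi / 2 / 2 ^+ k = y *+ 2.
  rewrite /y exprS [_ *+ 2]mulr2n; field; apply: expf_neq0; lra.
rewrite hx cos_mulr2n in IH.
have p0 : 0 < 2 ^+ k.+1 :> R by apply: exprn_gt0; lra.
have y0 : 0 <= y by rewrite /y; apply: divr_ge0; [apply: divr_ge0; [exact: pi_ge0|lra] | lra].
have y1 : y <= pi / 2.
  rewrite /y ler_pdivrMr //.
  have e1 : 1 <= 2 ^+ k.+1 :> R by apply: exprn_ege1; lra.
  have := @pi_ge0 R; nra.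
have cy : 0 <= cos y.
  apply: cos_ge0_pihalf; rewrite y1 andbT (le_trans _ y0) // oppr_le0; apply: divr_ge0; [exact: pi_ge0|lra].
have cy1 := cos_le1 y.
have p1 : 0 < 2 ^+ k :> R by apply: exprn_gt0; lra.
rewrite exprS.
have : (1 - cos y) * 2 <= 1 / 2 ^+ k by nra.
move=> h.
have -> : 1 / (2 * 2 ^+ k) = (1 / 2 ^+ k) / 2 :> R by field; lra.
lra.
Qed.

Lemma sin_sum (a t : R) : sin (a - t) + sin (a + t) = 2 * sin a * cos t.
Proof. rewrite sinB sinD; ring. Qed.


Lemma row_sum (m : nat) (f : nat -> R) (P : 'I_m -> bool) (a : nat) (Q : bool) :
 (forall k : 'I_m, P k = ((k : nat) == a) && Q) ->
 \sum_(k < m) f k * ind R (P k) = if (a < m)%N then f a * ind R Q else 0.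
Proof.
move=> HP; rewrite -(@sum_ind1 R m a (fun k => f k * ind R Q)).
apply: eq_bigr => k _; rewrite HP -ind_mul; ring.
Qed.

Ltac rpre := rewrite !mxE; under eq_bigr => k _ do rewrite !mxE.
Ltac rfin := rewrite /ind; have := ltn_ord j; repeat (case: ifP => ?); rewrite ?mulr1 ?mulr0; try lia; try lra.

Lemma rowSh m (f : nat -> R) (j : 'I_m) :
  (\row_(k < m) f k *m Sh R m) 0 j = if (0 < j)%N then f j.-1 else 0.
Proof. rpre; rewrite (@row_sum _ f _ j.-1 (0 < j)%N); last by move=> k; lia. rfin. Qed.
Lemma rowShT m (f : nat -> R) (j : 'I_m) :
  (\row_(k < m) f k *m (Sh R m)^T) 0 j = if (j.+1 < m)%N then f j.+1 else 0.
Proof. rpre; rewrite (@row_sum _ f _ j.+1 true); last by move=> k; lia. rfin. Qed.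
Lemma rowE m (f : nat -> R) (j : 'I_m) :
  (\row_(k < m) f k *m E11 R m) 0 j = if (j == 0 :> nat)%N then f 0%N else 0.
Proof. rpre; rewrite (@row_sum _ f _ 0 (j == 0 :> nat)); last by move=> k; lia. rfin. Qed.
Lemma rowF m (f : nat -> R) (j : 'I_m) :
  (\row_(k < m) f k *m Emm R m) 0 j = if (j == m.-1 :> nat)%N then f m.-1 else 0.
Proof. rpre; rewrite (@row_sum _ f _ m.-1 (j == m.-1 :> nat)); last by move=> k; lia. rfin. Qed.

Lemma mxDE p q (A B : 'M[R]_(p, q)) i j : (A + B) i j = A i j + B i j.
Proof. by rewrite mxE. Qed.
Lemma mxBE p q (A B : 'M[R]_(p, q)) i j : (A - B) i j = A i j - B i j.
Proof. by rewrite !mxE. Qed.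
Lemma mxNE p q (A : 'M[R]_(p, q)) i j : (- A) i j = - A i j.
Proof. by rewrite mxE. Qed.
Lemma mxZE p q a (A : 'M[R]_(p, q)) i j : (a *: A) i j = a * A i j.
Proof. by rewrite mxE. Qed.

Definition phi (m : nat) : R := pi / (4 * m%:R).
Definition fv (m : nat) (i : nat) : R := (-1) ^+ i * sin ((2 * i%:R + 1) * phi m).
Definition wv (m : nat) : 'rV[R]_m := \row_(i < m) fv m i.

Lemma w_eig m : (2 <= m)%N -> wv m *m Atil R m = (- 2 * cos (2 * phi m)) *: wv m.
Proof.
move=> m2; apply/matrixP => i0 j; rewrite (ord1 i0) /wv AtilE mulmxBr !mulmxDr.
rewrite !(mxDE, mxBE, mxNE) rowSh rowShT rowE rowF mxZE mxE.
set p := phi m.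
have id a := sin_sum a (2 * p).
case: j => [[|i] Hj] /=.
- rewrite (_ : (0 == m.-1) = false); last by lia.
  rewrite (_ : (1 < m)%N = true); last by lia.
  rewrite /fv expr0 expr1 mul1r mulN1r.
  have e0 : (2 * 0%:R + 1) * phi m = p by rewrite /p; ring.
  have e1 : (2 * 1%:R + 1) * phi m = p + 2 * p by rewrite /p; ring.
  rewrite e0 e1; have := id p.
  rewrite (_ : p - 2 * p = - p); last by ring.
  rewrite sinN; lra.
- set a := (2 * i.+1%:R + 1) * p.
  have ea1 : (2 * i%:R + 1) * phi m = a - 2 * p by rewrite /a /p; ring.
  have ea2 : (2 * i.+1%:R + 1) * phi m = a by [].
  case: (ltnP i.+2 m) => h /=.
  + rewrite (_ : (i.+1 == m.-1) = false); last by lia.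
    rewrite /fv !exprS ea1 ea2.
    have ea3 : (2 * i.+2%:R + 1) * phi m = a + 2 * p by rewrite /a /p; ring.
    rewrite ea3.
    have hX : sin (a + 2 * p) = 2 * sin a * cos (2 * p) - sin (a - 2 * p) by rewrite -id; ring.
    rewrite hX; ring.
  + have em : m = i.+2 by lia.
    rewrite (_ : (i.+1 == m.-1) = true); last by lia.
    rewrite (_ : m.-1 = i.+1); last by lia.
    rewrite /fv !exprS ea1 ea2.
    have ea : a = pi / 2 - p.
      rewrite /a /p /phi em; field.
      apply/eqP => h0; have := ler0n R i; lra.
    have hs : sin a = cos p by rewrite ea -opprB sinN sinBpihalf opprK.
    have hs2 : sin (a + 2 * p) = cos p by rewrite ea (_ : pi / 2 - p + 2 * p = p + pi / 2) ?sinDpihalf //; ring.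
    have hX : sin (a - 2 * p) = 2 * cos p * cos (2 * p) - cos p by have := id a; rewrite hs hs2; lra.
    rewrite hX hs; ring.
Qed.

Lemma eig_sq n (M : 'M[R]_n) (v : 'rV[R]_n) (nu : R) : v != 0 -> 0 <= nu ->
  v *m (M *m M) = nu *: v -> eigenvalue M (Num.sqrt nu) \/ eigenvalue M (- Num.sqrt nu).
Proof.
move=> vnz nu0 Hv; set s := Num.sqrt nu.
have ss : s * s = nu by rewrite -expr2 sqr_sqrtr.
have key : v *m ((M - s%:M) *m (M + s%:M)) = 0.
  rewrite mulmxDr !mulmxBl mul_mx_scalar mul_scalar_mx -scalar_mxM ss.
  by rewrite addrA subrK mulmxBr Hv mul_mx_scalar subrr.
case: (eqVneq (v *m (M - s%:M)) 0) => [h|h].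
- left; apply/eigenvalueP; exists v => //.
  by move/eqP: h; rewrite mulmxBr mul_mx_scalar subr_eq0 => /eqP.
- right; apply/eigenvalueP; exists (v *m (M - s%:M)) => //.
  move: key; rewrite mulmxA mulmxDr mul_mx_scalar => /eqP; rewrite addr_eq0 => /eqP ->.
  by rewrite scaleNr.
Qed.

Lemma v_eig m (c : R) : (2 <= m)%N ->
  row_mx (wv m) 0 *m (Htil m c *m Htil m c)
  = (4 * (c - 1) ^+ 2 + 4 * c * (2 - 2 * cos (2 * phi m))) *: row_mx (wv m) (0 : 'rV_m).
Proof.
move=> m2; rewrite HH mulmxDr mul_mx_scalar -scalemxAr /Dm mul_row_block.
rewrite !mulmx0 !mul0mx !addr0 mulmxDr w_eig // mul_mx_scalar.
rewrite !scale_row_mx add_row_mx !scaler0 addr0 -[2 *: _ + _]scalerDl scalerA -scalerDl.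
by congr (row_mx (_ *: _) _); ring.
Qed.
End Trig.

Lemma part2 (R : realType) (c : R) : 0 <= c -> forall eps : R, 0 < eps ->
  exists (m : nat) (lam : R), eigenvalue (Htil m c) lam /\
    - (2 * `|c - 1|) - eps < lam < 2 * `|c - 1| + eps.
Proof.
move=> c0 eps e0.
set K := 8 * c / eps ^+ 2.
have K0 : 0 <= K by rewrite /K; apply: divr_ge0; [lra | apply: sqr_ge0].
set n := Num.bound K; set k := n.+1; set m := (2 ^ k)%N.
have m2 : (2 <= m)%N by rewrite /m expnS; have := expn_gt0 2 n; lia.
have mR : m%:R = 2 ^+ k :> R by rewrite /m natrX.
have pk : 0 < 2 ^+ k :> R by apply: exprn_gt0; lra.
have Kk : K < 2 ^+ k.
  apply: (lt_trans (archi_boundP K0)); rewrite -/n -mR ltr_nat /m.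
  apply: (ltn_trans (ltn_expl n (isT : (1 < 2)%N))). by rewrite ltn_exp2l.
have ephi : 2 * phi R m = pi / 2 / 2 ^+ k.
  by rewrite /phi mR; field; rewrite gt_eqF.
set mu := 2 - 2 * cos (2 * phi R m).
have mu0 : 0 <= mu by rewrite /mu; have := cos_le1 (2 * phi R m); lra.
have mub : mu <= 2 / 2 ^+ k.
  have := cos_bound R k; rewrite -ephi /mu => h.
  have -> : 2 / 2 ^+ k = 2 * (1 / 2 ^+ k) :> R by rewrite mulrA mulr1.
  lra.
have cmu : 4 * c * mu < eps ^+ 2.
  have h1 : 4 * c * mu <= 8 * c / 2 ^+ k.
    have -> : 8 * c / 2 ^+ k = 4 * c * (2 / 2 ^+ k) by rewrite !mulrA; congr (_ / _); ring.
    by apply: ler_wpM2l => //; lra.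
  have h2 : 8 * c / 2 ^+ k < eps ^+ 2.
    rewrite ltr_pdivrMr //; rewrite /K ltr_pdivrMr ?exprn_gt0 // in Kk.
    by rewrite [eps ^+ 2 * _]mulrC.
  exact: (le_lt_trans h1 h2).
set nu := 4 * (c - 1) ^+ 2 + 4 * c * mu.
have nu0 : 0 <= nu by rewrite /nu; have := sqr_ge0 (c - 1); nra.
have vnz : row_mx (wv R m) (0 : 'rV_m) != 0.
  rewrite row_mx_eq0 negb_and; apply/orP; left; apply/eqP => h.
  have m0 : (0 < m)%N by lia.
  have := congr1 (fun M : 'rV[R]_m => M 0 (Ordinal m0)) h; rewrite !mxE /fv /= expr0 mul1r mulr0 add0r mul1r.
  apply/eqP; rewrite gt_eqF //; apply: sin_gt0_pihalf; apply/andP; split.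
    rewrite /phi; apply: divr_gt0; [exact: pi_gt0 | rewrite mR; lra].
  rewrite /phi mR ltr_pdivrMr; last lra.
  have p0 := @pi_gt0 R; have h1 : 1 <= 2 ^+ k :> R by apply: exprn_ege1; lra.
  nra.
have := eig_sq vnz nu0 (v_eig c m2); rewrite -/mu -/nu.
set s := Num.sqrt nu.
have s0 : 0 <= s by apply: sqrtr_ge0.
have ss : s ^+ 2 = nu by rewrite sqr_sqrtr.
have a0 := normr_ge0 (c - 1).
have a2 : `|c - 1| ^+ 2 = (c - 1) ^+ 2 by rewrite real_normK // num_real.
have sb : s < 2 * `|c - 1| + eps.
  rewrite /nu in ss; nra.
move=> [h|h]; exists m.
- by exists s; split => //; apply/andP; split; lra.
- by exists (- s); split => //; apply/andP; split; lra.
Qed.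

Theorem theorem6p2 (R : realType) :
  (forall (m : nat) (c : R), 0 <= c ->
     (forall lam : R,
        mup lam (char_poly (Htil m c)) = mup (- lam) (char_poly (Htil m c)))
     /\ (forall lam : R, eigenvalue (Htil m c) lam ->
           ~ (- (2 * `|c - 1|) < lam < 2 * `|c - 1|)))
  /\ (forall (c : R), 0 <= c -> forall eps : R, 0 < eps ->
        exists (m : nat) (lam : R), eigenvalue (Htil m c) lam /\
          - (2 * `|c - 1|) - eps < lam < 2 * `|c - 1| + eps).
Proof.
split.
- move=> m c c0; split.
  + by move=> l; apply: part1a.
  + by move=> l; apply: gap.
- exact: part2.
Qed.
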